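(* For every $r\in\mathbb N$ and every $s>0$, the Hardy–Steklov-type operator $\mathcal P_r(s)$ maps $\mathbf E$ into $\mathbf E^{r}$.
   Context: Let $G=\mathbb R_+\times\mathbb R$ be the ''$ax+b$'' group with multiplication $(a_1,b_1)(a_2,b_2)=(a_1a_2,\,a_1b_2+b_1)$. Let $T$ be a strongly continuous representation of $G$ in a Banach space $\mathbf E$ with $\|T(g)f\|_{\mathbf E}\le\|f\|_{\mathbf E}$. Put $T_1(t)=T(e^{t},0)$, $T_2(t)=T(1,t)$, with (closed) generators $\mathbb A_1,\mathbb A_2$. For $r\in\mathbb N$, $\mathbf E^{r}$ is the space of $f\in\mathbf E$ for which all products $\mathbb A_{j_1}\cdots\mathbb A_{j_k}f$, $1\le k\le r$, $j_i\in\{1,2\}$, are defined (with the norm $\|f\|_{\mathbf E}+\sum_{k=1}^r\sum_{(j_1,\dots,j_k)}\|\mathbb A_{j_1}\cdots\mathbb A_{j_k}f\|_{\mathbf E}$). For $s>0$, $r\in\mathbb N$ and $f\in\mathbf E$, $$\mathcal P_r(s)f=(s/r)^{-2r}\int_{[0,s/r]^{2r}}T_1(t_{1,1}+\dots+t_{1,r})\,T_2(t_{2,1}+\dots+t_{2,r})f\;dt_{1,1}\cdots dt_{1,r}\,dt_{2,1}\cdots dt_{2,r}$$ (Bochner integral). *)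

(* Defs.v *)
From Stdlib Require Import Reals Lra List.
From Coquelicot Require Import Coquelicot.
Open Scope R_scope.

Section Defs.
Variable E : CompleteNormedModule R_AbsRing.

(* Representation of the ax+b group: T a b is the operator T(a,b), a > 0. *)
Definition is_contr_rep (T : R -> R -> E -> E) : Prop :=
  (forall a b, 0 < a -> forall f h, T a b (plus f h) = plus (T a b f) (T a b h)) /\
  (forall a b, 0 < a -> forall (c : R) f, T a b (scal c f) = scal c (T a b f)) /\
  (forall f, T 1 0 f = f) /\
  (forall a1 b1 a2 b2 f, 0 < a1 -> 0 < a2 ->
      T a1 b1 (T a2 b2 f) = T (a1 * a2) (a1 * b2 + b1) f) /\
  (forall f a b, 0 < a ->
      filterlim (fun p : R * R => T (fst p) (snd p) f) (locally (a, b)) (locally (T a b f))) /\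
  (forall a b f, 0 < a -> norm (T a b f) <= norm f).

Definition T1 (T : R -> R -> E -> E) (t : R) : E -> E := T (exp t) 0.
Definition T2 (T : R -> R -> E -> E) (t : R) : E -> E := T 1 t.

(* Graph of the (closed) generator of a one-parameter semigroup S:
   f is in the domain and A f = g iff (S(t) f - f)/t -> g as t -> 0+. *)
Definition gen (S : R -> E -> E) (f g : E) : Prop :=
  filterlim (fun t => scal (/ t) (minus (S t f) f)) (at_right 0) (locally g).

Definition genj (T : R -> R -> E -> E) (j : bool) : E -> E -> Prop :=
  if j then gen (T2 T) else gen (T1 T).

(* applies T [j1; ...; jk] f g  :<->  A_{j1} ... A_{jk} f is defined and = g. *)
Fixpoint applies (T : R -> R -> E -> E) (w : list bool) (f g : E) : Prop :=
  match w with
  | nil => g = f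
  | j :: w' => exists h, applies T w' f h /\ genj T j h g
  end.

Definition in_Er (T : R -> R -> E -> E) (r : nat) (f : E) : Prop :=
  forall w : list bool, (1 <= length w)%nat -> (length w <= r)%nat ->
    exists g, applies T w f g.

Fixpoint cube_int (n : nat) (c : R) (F : list R -> E) : E :=
  match n with
  | O => F nil
  | S n' => RInt (fun t => cube_int n' c (fun l => F (t :: l))) 0 c
  end.

Definition sumR (l : list R) : R := fold_right Rplus 0 l.

Definition P_op (T : R -> R -> E -> E) (r : nat) (s : R) (f : E) : E :=
  scal (/ ((s / INR r) ^ (2 * r)))
    (cube_int (2 * r) (s / INR r)
       (fun l => T1 T (sumR (firstn r l)) (T2 T (sumR (skipn r l)) f))).

End Defs.

(* Main.v *)
Require Import Defs.
From Stdlib Require Import Reals List.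
From Coquelicot Require Import Coquelicot.
From Stdlib Require Import Lra Lia FunctionalExtensionality.
Open Scope R_scope.

Lemma minus_def {G : AbelianGroup} (x y : G) : minus x y = plus x (opp y).
Proof. reflexivity. Qed.

Lemma plus_minus_G {G : AbelianGroup} (A B C : G) : plus A B = C -> B = minus C A.
Proof.
intros H. rewrite <- H. rewrite minus_def. rewrite (plus_comm A B), <- plus_assoc, plus_opp_r, plus_zero_r.
reflexivity.
Qed.

Lemma fin_eq {V : ModuleSpace R_Ring} (W P x : V) (m : R) :
  plus (scal m (minus W zero)) (scal 1 (minus (scal 1 P) x)) = plus (minus P x) (scal m W).
Proof.
rewrite minus_zero_r. change 1 with (@one R_Ring). rewrite !scal_one. apply plus_comm.
Qed.

Lemma plus_minus_swap {G : AbelianGroup} (a b c d : G) :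
  minus (plus a b) (plus c d) = plus (minus a c) (minus b d).
Proof.
rewrite !minus_def, opp_plus.
rewrite <- !plus_assoc. f_equal. rewrite (plus_comm b), <- plus_assoc. f_equal. apply plus_comm.
Qed.

Lemma mod_plus_q {V : ModuleSpace R_Ring} (k : R) (a b c d : V) :
  scal k (minus (plus a b) (plus c d)) = plus (scal k (minus a c)) (scal k (minus b d)).
Proof.
rewrite <- scal_distr_l. f_equal. exact (@plus_minus_swap (ModuleSpace.AbelianGroup _ V) a b c d).
Qed.

Lemma mod_scal_q {V : ModuleSpace R_Ring} (k a : R) (u v : V) :
  scal k (minus (scal a u) (scal a v)) = scal a (scal k (minus u v)).
Proof.
rewrite <- scal_minus_distr_l, !scal_assoc. f_equal. apply Rmult_comm.
Qed.

Section Gen.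
Variable E : CompleteNormedModule R_AbsRing.

Lemma lim_ar (q : R -> E) (l : E) :
  filterlim q (at_right 0) (locally l) <->
  (forall eps, 0 < eps -> exists eta, 0 < eta /\
     forall t, 0 < t < eta -> norm (minus (q t) l) < eps).
Proof.
split.
- intros H eps He.
  assert (Hnf := @norm_factor_gt_0 R_AbsRing E).
  assert (He' : 0 < eps / (@norm_factor R_AbsRing E)) by (apply Rdiv_lt_0_compat; lra).
  destruct (proj1 (filterlim_locally q l) H (mkposreal _ He')) as [d Hd].
  exists d. split. apply cond_pos.
  intros t Ht.
  assert (Hb : ball l (mkposreal _ He') (q t)).
  { apply Hd. change (Rabs (t - 0) < d). rewrite Rminus_0_r, Rabs_pos_eq; lra. lra. }
  pose proof (@norm_compat2 R_AbsRing E _ _ _ Hb) as Hb2. simpl in Hb2.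
  set (nf := @norm_factor R_AbsRing E) in *. replace eps with (nf * (eps / nf)) by (field; lra). exact Hb2.
- intros H. apply filterlim_locally. intros eps.
  destruct (H eps (cond_pos eps)) as [eta [He Ht]].
  exists (mkposreal eta He). intros t Hb Hpos.
  change (Rabs (t - 0) < eta) in Hb. rewrite Rminus_0_r in Hb.
  apply (@norm_compat1 R_AbsRing E). apply Ht. split. exact Hpos.
  apply Rabs_def2 in Hb. lra.
Qed.

Lemma derive_quot (F : R -> E) (x : R) (l : E) :
  is_derive F x l ->
  filterlim (fun h => scal (/ h) (minus (F (x + h)) (F x))) (at_right 0) (locally l).
Proof.
intros [_ Hd]. apply lim_ar. intros eps He.
assert (Hfl : is_filter_lim (locally x) x) by (intros P HP; exact HP).
specialize (Hd x Hfl (pos_div_2 (mkposreal eps He))).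
destruct Hd as [d Hd].
exists d. split. apply cond_pos. intros t Ht.
assert (Hb : ball x d (x + t)).
{ change (Rabs (x + t - x) < d). replace (x + t - x) with t by ring.
  rewrite Rabs_pos_eq; lra. }
specialize (Hd _ Hb). simpl in Hd.
match type of Hd with context [eps / 2 * ?N] => replace N with t in Hd end.
2:{ simpl. unfold minus, plus, opp; simpl. replace (x + t + - x) with t by ring.
  rewrite Rabs_pos_eq; lra. }
assert (Heq : (minus (scal (/ t) (minus (F (x + t)) (F x))) l) =
  (scal (/ t) (minus (minus (F (x + t)) (F x)) (scal (minus (x + t) x) l)))).
{ rewrite (scal_minus_distr_l (/ t) (minus (F (x+t)) (F x))).
    f_equal. rewrite scal_assoc.
    replace (mult (/ t) (minus (x + t) x)) with (@one R_Ring).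
    symmetry; apply scal_one. change (1 = / t * (x + t + - x)). field. lra. }
cbv beta. apply Rle_lt_trans with (norm (scal (/ t) (minus (minus (F (x + t)) (F x)) (scal (minus (x + t) x) l)))).
{ right. apply f_equal. exact Heq. }
eapply Rle_lt_trans. apply (@norm_scal R_AbsRing E).
change (Rabs (/ t) * norm (minus (minus (F (x + t)) (F x)) (scal (minus (x + t) x) l)) < eps).
rewrite Rabs_pos_eq by (left; apply Rinv_0_lt_compat; lra).
apply Rle_lt_trans with (/ t * (eps / 2 * t)).
apply Rmult_le_compat_l. left; apply Rinv_0_lt_compat; lra. exact Hd.
replace (/ t * (eps / 2 * t)) with (eps / 2) by (field; lra). lra.
Qed.


Definition blin (L : E -> E) : Prop :=
  (forall f h, L (plus f h) = plus (L f) (L h)) /\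
  (forall (k : R) f, L (scal k f) = scal k (L f)) /\
  (forall f, norm (L f) <= norm f).

Lemma blin_zero L : blin L -> L zero = zero.
Proof.
intros [_ [Hs _]].
transitivity (L (scal (0:R) zero)). { f_equal. symmetry. exact (@scal_zero_l R_Ring E zero). }
rewrite Hs. exact (@scal_zero_l R_Ring E _).
Qed.

Lemma blin_opp L : blin L -> forall f, L (opp f) = opp (L f).
Proof.
intros HL f. destruct HL as [_ [Hs _]].
transitivity (L (scal (opp (@one R_Ring)) f)). { f_equal. symmetry. exact (@scal_opp_one R_Ring E f). }
rewrite Hs. exact (@scal_opp_one R_Ring E _).
Qed.

Lemma blin_minus L : blin L -> forall f h, L (minus f h) = minus (L f) (L h).
Proof.
intros HL f h. unfold minus. rewrite (proj1 HL). rewrite (blin_opp L HL). reflexivity.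
Qed.

Lemma blin_cont L : blin L -> forall x, filterlim L (locally x) (locally (L x)).
Proof.
intros HL x. apply filterlim_locally. intros eps.
assert (Hnf := @norm_factor_gt_0 R_AbsRing E).
set (nf := @norm_factor R_AbsRing E) in *.
assert (He' : 0 < eps / nf) by (apply Rdiv_lt_0_compat; [apply cond_pos|lra]).
exists (mkposreal _ He'). intros y Hy.
pose proof (@norm_compat2 R_AbsRing E _ _ _ Hy) as H2. simpl in H2.
apply (@norm_compat1 R_AbsRing E).
rewrite <- (blin_minus L HL).
eapply Rle_lt_trans. apply (proj2 (proj2 HL)).
replace (pos eps) with (nf * (eps / nf)) by (field; lra). exact H2.
Qed.

Lemma blin_riemann L : blin L -> forall f ptd,
  L (Riemann_sum f ptd) = Riemann_sum (fun t => L (f t)) ptd.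
Proof.
intros HL f ptd. unfold Riemann_sum.
assert (Hg : forall (l : list (R * R)) (p : R * R),
  L (seq.foldr plus zero (seq.pairmap (fun x y : R * R => scal (fst y - fst x) (f (snd y))) p l))
  = seq.foldr plus zero (seq.pairmap (fun x y : R * R => scal (fst y - fst x) (L (f (snd y)))) p l)).
{ induction l as [|a l IH]; intros p.
  - simpl. apply blin_zero; exact HL.
  - simpl. rewrite (proj1 HL). rewrite (proj1 (proj2 HL)). f_equal. apply IH. }
apply Hg.
Qed.

Lemma is_RInt_blin L : blin L -> forall f a b I,
  is_RInt f a b I -> is_RInt (fun t => L (f t)) a b (L I).
Proof.
intros HL f a b I H. unfold is_RInt in *.
eapply filterlim_ext.
2:{ eapply filterlim_comp. exact H. apply blin_cont. exact HL. }
intros ptd. simpl. rewrite (proj1 (proj2 HL)). f_equal. apply blin_riemann. exact HL.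
Qed.

Lemma ex_RInt_blin L : blin L -> forall f a b,
  ex_RInt f a b -> ex_RInt (fun t => L (f t)) a b.
Proof.
intros HL f a b [I H]. exists (L I). apply is_RInt_blin; assumption.
Qed.

Lemma RInt_blin L : blin L -> forall f a b,
  ex_RInt f a b -> RInt (fun t => L (f t)) a b = L (RInt f a b).
Proof.
intros HL f a b H. apply is_RInt_unique. apply is_RInt_blin. exact HL.
apply RInt_correct. exact H.
Qed.

Lemma blin_comp L1 L2 : blin L1 -> blin L2 -> blin (fun x => L1 (L2 x)).
Proof.
intros [a1 [b1 c1]] [a2 [b2 c2]]. split; [|split].
- intros f h. rewrite a2, a1. reflexivity.
- intros k f. rewrite b2, b1. reflexivity.
- intros f. eapply Rle_trans. apply c1. apply c2.
Qed.


Lemma cont_exp_lin (m x : R) : continuous (fun u => exp (-(m*u))) x.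
Proof. apply (@ex_derive_continuous R_AbsRing R_NormedModule). auto_derive. auto. Qed.

Definition grp (U : R -> E -> E) : Prop :=
  (forall t, blin (U t)) /\ (forall f, U 0 f = f) /\
  (forall s t f, U s (U t f) = U (s + t) f) /\
  (forall f t, continuous (fun t => U t f) t).

Definition Wop (U : R -> E -> E) (m c : R) (x : E) : E :=
  RInt (fun u => scal (exp (-(m*u))) (U u x)) 0 c.

Lemma phi_cont U m x : grp U -> forall u,
  continuous (fun u => scal (exp (-(m*u))) (U u x)) u.
Proof.
intros HU u. apply (@continuous_scal R_UniformSpace R_AbsRing E).
apply cont_exp_lin. apply (proj2 (proj2 (proj2 HU))).
Qed.

Lemma phi_ex U m x : grp U -> forall a b,
  ex_RInt (fun u => scal (exp (-(m*u))) (U u x)) a b.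
Proof.
intros HU a b. apply ex_RInt_continuous. intros z _. apply phi_cont. exact HU.
Qed.

Lemma plus_minus_E (A B C : E) : plus A B = C -> B = minus C A.
Proof. intros H. apply plus_minus_G. exact H. Qed.

Lemma gen_eq (S : R -> E -> E) f g g' : gen E S f g -> g = g' -> gen E S f g'.
Proof. intros H <-. exact H. Qed.

Lemma is_derive_scal_fct' (f : R -> R) (g : R -> E) x df dg :
  is_derive f x df -> is_derive g x dg ->
  is_derive (fun t => scal (f t) (g t)) x (plus (scal df (g x)) (scal (f x) dg)).
Proof.
intros Hf Hg. unfold is_derive.
eapply filterdiff_ext_lin.
apply (@filterdiff_scal_fct R_AbsRing R_NormedModule E x f g).
intros; apply Rmult_comm. exact Hf. exact Hg.
intros y. simpl. rewrite (@scal_distr_l R_Ring E). rewrite !(@scal_assoc R_Ring E).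
f_equal; f_equal; apply Rmult_comm.
Qed.


Lemma lim_eq (q : R -> E) (l l' : E) :
  filterlim q (at_right 0) (locally l) -> l = l' -> filterlim q (at_right 0) (locally l').
Proof. intros H <-. exact H. Qed.

Lemma gen_W U m c x : grp U ->
  gen E U (Wop U m c x)
    (plus (minus (scal (exp (-(m*c))) (U c x)) x) (scal m (Wop U m c x))).
Proof.
intros HU. pose proof HU as [Hbl [H0 [Hadd Hcont]]].
set (phi := fun u => scal (exp (-(m*u))) (U u x)).
set (Psi := fun z => RInt phi 0 z).
assert (HPsi : forall z, is_derive Psi z (phi z)).
{ intros z. apply is_derive_RInt with (a := 0).
  apply filter_forall. intros b. apply RInt_correct. apply phi_ex; auto.
  apply phi_cont; auto. }
set (G := fun z => scal (exp (m*z)) (minus (Psi (c+z)) (Psi z))).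
assert (HUW : forall z, U z (Wop U m c x) = G z).
{ intros z. unfold Wop, G, Psi.
  rewrite <- (RInt_blin (U z) (Hbl z)) by (apply phi_ex; auto).
  transitivity (RInt (fun u => scal (exp (m*z)) (scal 1 (phi (1*u + z)))) 0 c).
  { apply RInt_ext. intros u _. unfold phi. rewrite (proj1 (proj2 (Hbl z))). rewrite Hadd.
    rewrite !(@scal_assoc R_Ring E). replace (1*u+z) with (z+u) by ring. f_equal.
    transitivity ((exp (m*z) * 1) * exp (-(m*(z+u)))). 2: reflexivity.
    rewrite Rmult_1_r, <- exp_plus. f_equal. ring. }
  rewrite RInt_scal. apply f_equal. rewrite (RInt_comp_lin phi 1 z 0 c).
  replace (1*0+z) with z by ring. replace (1*c+z) with (c+z) by ring.
  apply plus_minus_E. apply RInt_Chasles; apply phi_ex; auto.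
  apply phi_ex; auto.
  apply (ex_RInt_comp_lin phi 1 z 0 c). apply phi_ex; auto. }
assert (HW0 : G 0 = Wop U m c x).
{ rewrite <- HUW. apply H0. }
assert (HG : is_derive G 0
   (plus (scal (m * exp (m*0)) (minus (Psi (c+0)) (Psi 0)))
         (scal (exp (m*0)) (minus (scal 1 (phi (c+0))) (phi 0))))).
{ apply (is_derive_scal_fct' (fun z => exp (m*z)) (fun z => minus (Psi (c+z)) (Psi z))).
  - auto_derive; auto; ring.
  - apply (@is_derive_minus R_AbsRing E).
    + apply (@is_derive_comp R_AbsRing E Psi (fun z => c + z)). apply HPsi.
      auto_derive; auto.
    + apply HPsi. }
pose proof (derive_quot G 0 _ HG) as Hq.
unfold gen.
eapply filterlim_ext.
2:{ eapply lim_eq. exact Hq.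
    rewrite Rmult_0_r, exp_0, Rmult_1_r, Rplus_0_r.
    change (Psi c) with (Wop U m c x).
    replace (Psi 0) with (@zero E) by (symmetry; apply RInt_point).
    replace (phi 0) with x.
    2:{ unfold phi. rewrite Rmult_0_r, Ropp_0, exp_0. rewrite H0. symmetry. exact (@scal_one R_Ring E x). }
    change (phi c) with (scal (exp (-(m*c))) (U c x)). apply (@fin_eq E). }
intros h. cbv beta. rewrite Rplus_0_l. rewrite HUW. rewrite HW0. reflexivity.
Qed.


Lemma gen_comm U L f g : blin L -> (forall t h, U t (L h) = L (U t h)) ->
  gen E U f g -> gen E U (L f) (L g).
Proof.
intros HL Hc H. unfold gen in *.
eapply filterlim_ext.
2:{ eapply filterlim_comp. exact H. apply blin_cont. exact HL. }
intros t. cbv beta. rewrite Hc. rewrite (proj1 (proj2 HL)). f_equal.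
apply blin_minus. exact HL.
Qed.

Lemma gen_plus U f g f' g' : (forall t, blin (U t)) ->
  gen E U f g -> gen E U f' g' -> gen E U (plus f f') (plus g g').
Proof.
intros HU H H'. unfold gen in *.
eapply filterlim_ext.
2:{ eapply filterlim_comp_2. exact H. exact H'. apply (@filterlim_plus R_AbsRing E). }
intros t. cbv beta. rewrite (proj1 (HU t)). symmetry. apply (@mod_plus_q E).
Qed.

Lemma gen_scal U a f g : (forall t, blin (U t)) ->
  gen E U f g -> gen E U (scal a f) (scal a g).
Proof.
intros HU H. unfold gen in *.
eapply filterlim_ext.
2:{ eapply filterlim_comp. exact H. apply (@filterlim_scal_r R_AbsRing E). }
intros t. cbv beta. rewrite (proj1 (proj2 (HU t))). symmetry. apply (@mod_scal_q E).
Qed.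

End Gen.
Arguments blin {E}. Arguments grp {E}. Arguments Wop {E}.


Lemma exp_le_1 x : x <= 0 -> exp x <= 1.
Proof.
intros H. destruct (Req_dec x 0) as [->|Hn]. rewrite exp_0; lra.
left. rewrite <- exp_0. apply exp_increasing. lra.
Qed.

Lemma id_W {V : ModuleSpace R_Ring} (L : V -> V)
  (HLs : forall k a, L (scal k a) = scal k (L a))
  (HLm : forall a b, L (minus a b) = minus (L a) (L b))
  (A x y : V) (e w z s : R) : z <> 0 -> s <> 0 -> s = w * z ->
  minus (scal (/z) (minus (scal e (L A)) (scal e (L x)))) (scal (e*w) (L y)) =
  scal e (L (scal w (minus (scal (/s) (minus A x)) y))).
Proof.
intros Hz Hs Hsw.
rewrite HLs, HLm, HLs, HLm.
rewrite <- scal_minus_distr_l.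
rewrite !scal_minus_distr_l. rewrite !scal_assoc.
assert (Hc : mult (/ z) e = mult (mult e w) (/ s)).
{ change (/ z * e = e * w * / s). subst s. field. split; auto. intros ->. apply Hs. ring. }
rewrite Hc. reflexivity.
Qed.

Lemma id_W1 {V : ModuleSpace R_Ring} (L : V -> V)
  (HLs : forall k a, L (scal k a) = scal k (L a))
  (HLm : forall a b, L (minus a b) = minus (L a) (L b))
  (A x y : V) (w z s : R) : z <> 0 -> s <> 0 -> s = w * z ->
  minus (scal (/z) (minus (L A) (L x))) (scal w (L y)) =
  L (scal w (minus (scal (/s) (minus A x)) y)).
Proof.
intros Hz Hs Hsw.
rewrite HLs, HLm, HLs, HLm.
rewrite !scal_minus_distr_l. rewrite !scal_assoc.
assert (Hc : / z = mult w (/ s)).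
{ change (/ z = w * / s). subst s. field. split; auto. intros ->. apply Hs. ring. }
rewrite Hc. reflexivity.
Qed.

Lemma minus_scal {V : ModuleSpace R_Ring} (x y : V) : minus x y = plus x (scal (-1) y).
Proof.
rewrite minus_def. f_equal. rewrite <- scal_opp_one. reflexivity.
Qed.

Fixpoint cf (w : list bool) : nat :=
  match w with nil => 0%nat | b :: w' => ((if b then 0 else 1) + cf w')%nat end.
Fixpoint ct (w : list bool) : nat :=
  match w with nil => 0%nat | b :: w' => ((if b then 1 else 0) + ct w')%nat end.

Lemma cf_app w b : cf (w ++ b :: nil) = (cf w + (if b then 0 else 1))%nat.
Proof. induction w as [|a w IH]; simpl. destruct b; reflexivity. rewrite IH. lia. Qed.
Lemma ct_app w b : ct (w ++ b :: nil) = (ct w + (if b then 1 else 0))%nat.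
Proof. induction w as [|a w IH]; simpl. destruct b; reflexivity. rewrite IH. lia. Qed.
Lemma cf_ct w : (cf w + ct w)%nat = length w.
Proof. induction w as [|a w IH]; simpl. reflexivity. destruct a; simpl; lia. Qed.

Lemma cube_S {E : CompleteNormedModule R_AbsRing} n c (F : list R -> E) :
  cube_int E (S n) c F = RInt (fun t => cube_int E n c (fun l => F (t :: l))) 0 c.
Proof. reflexivity. Qed.

Lemma Wop0 {E : CompleteNormedModule R_AbsRing} (U : R -> E -> E) c h :
  Wop U 0 c h = RInt (fun t => U t h) 0 c.
Proof.
unfold Wop. apply RInt_ext. intros x _. rewrite Rmult_0_l, Ropp_0, exp_0.
exact (scal_one _).
Qed.

Lemma cube_U {E : CompleteNormedModule R_AbsRing} (U : R -> E -> E) (L : E -> E) c g :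
  grp U -> blin L -> forall n b,
  cube_int E n c (fun l => L (U (b + sumR l) g)) = L (U b (Nat.iter n (Wop U 0 c) g)).
Proof.
intros HU HL. destruct HU as [Hbl [H0 [Hadd Hcont]]].
induction n; intros b.
- simpl. rewrite Rplus_0_r. reflexivity.
- rewrite cube_S.
  transitivity (RInt (fun t => (fun v => L (U b v)) (U t (Nat.iter n (Wop U 0 c) g))) 0 c).
  { apply RInt_ext. intros t _.
    assert (Hf : (fun l => L (U (b + sumR (t :: l)) g)) = (fun l => L (U ((b + t) + sumR l) g))).
    { apply functional_extensionality. intros l. simpl. f_equal. f_equal. ring. }
    rewrite Hf, IHn. rewrite Hadd. reflexivity. }
  rewrite (RInt_blin _ (fun v => L (U b v)) (blin_comp _ L (U b) HL (Hbl b))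
    (fun t => U t (Nat.iter n (Wop U 0 c) g)) 0 c (ex_RInt_continuous _ _ _ (fun z _ => Hcont _ z))).
  apply f_equal. apply f_equal. symmetry. exact (Wop0 _ c _).
Qed.

Section Rep.
Variable E : CompleteNormedModule R_AbsRing.
Variable T : R -> R -> E -> E.
Hypothesis HT : is_contr_rep E T.

Notation U1 := (T1 E T).
Notation U2 := (T2 E T).

Lemma T_blin a b : 0 < a -> blin (T a b).
Proof.
intros Ha. destruct HT as [Hp [Hs [_ [_ [_ Hn]]]]].
split; [|split]. apply Hp; auto. apply Hs; auto. intros f; apply Hn; auto.
Qed.

Lemma T_hom a1 b1 a2 b2 f : 0 < a1 -> 0 < a2 ->
  T a1 b1 (T a2 b2 f) = T (a1 * a2) (a1 * b2 + b1) f.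
Proof. destruct HT as [_ [_ [_ [H _]]]]. apply H. Qed.

Lemma T_id f : T 1 0 f = f.
Proof. destruct HT as [_ [_ [H _]]]. apply H. Qed.

Lemma T_cont f a b : 0 < a ->
  continuous (fun p : R * R => T (fst p) (snd p) f) (a, b).
Proof. destruct HT as [_ [_ [_ [_ [H _]]]]]. intros; apply H; auto. Qed.

Lemma grp1 : grp U1.
Proof.
split; [|split; [|split]].
- intros t. apply T_blin. apply exp_pos.
- intros f. unfold T1. rewrite exp_0. apply T_id.
- intros s t f. unfold T1. rewrite T_hom by apply exp_pos. rewrite exp_plus. f_equal. ring.
- intros f t. unfold T1.
  apply (continuous_comp_2 (fun t => exp t) (fun _ => 0) (fun a b => T a b f)).
  apply (@ex_derive_continuous R_AbsRing R_NormedModule). auto_derive. auto.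
  apply continuous_const. apply T_cont. apply exp_pos.
Qed.

Lemma grp2 : grp U2.
Proof.
split; [|split; [|split]].
- intros t. apply T_blin. lra.
- intros f. unfold T2. apply T_id.
- intros s t f. unfold T2. rewrite T_hom by lra. f_equal; ring.
- intros f t. unfold T2.
  apply (continuous_comp_2 (fun _ => 1) (fun t => t) (fun a b => T a b f)).
  apply continuous_const. apply continuous_id. apply T_cont. lra.
Qed.

Lemma comm12 z u h : U2 z (U1 u h) = U1 u (U2 (exp (-u) * z) h).
Proof.
unfold T1, T2. rewrite !T_hom by (try apply exp_pos; lra).
f_equal. ring. replace (exp u * (exp (- u) * z)) with ((exp u * exp (-u)) * z) by ring.
rewrite <- exp_plus. replace (u + - u) with 0 by ring. rewrite exp_0. ring.
Qed.

Lemma comm11 t a h : U1 t (U1 a h) = U1 a (U1 t h).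
Proof.
destruct grp1 as [_ [_ [H _]]]. rewrite !H. f_equal. ring.
Qed.

Lemma comm22 t a h : U2 t (U2 a h) = U2 a (U2 t h).
Proof.
destruct grp2 as [_ [_ [H _]]]. rewrite !H. f_equal. ring.
Qed.


Lemma nscal_pos (k : R) (v : E) : 0 <= k -> norm (scal k v) <= k * norm v.
Proof.
intros Hk. eapply Rle_trans. apply (@norm_scal R_AbsRing E).
change (Rabs k * norm v <= k * norm v). rewrite Rabs_pos_eq by auto. lra.
Qed.

Lemma gen2_T1 a x y : gen E U2 x y -> gen E U2 (U1 a x) (scal (exp (-a)) (U1 a y)).
Proof.
intros H. unfold gen in *. apply lim_ar. intros eps He.
assert (Hea := exp_pos a). assert (Hema := exp_pos (-a)).
assert (Hinv : exp a * exp (-a) = 1).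
{ rewrite <- exp_plus. replace (a + - a) with 0 by ring. apply exp_0. }
destruct (proj1 (lim_ar _ _ _) H (eps * exp a)) as [eta [Heta Hb]].
{ apply Rmult_lt_0_compat; auto. }
exists (eta * exp a). split. apply Rmult_lt_0_compat; auto.
intros t Ht. set (s := exp (-a) * t).
assert (Hs : 0 < s < eta).
{ unfold s. split. apply Rmult_lt_0_compat; lra.
  apply Rlt_le_trans with (exp (-a) * (eta * exp a)).
  apply Rmult_lt_compat_l; lra. right. replace (exp (- a) * (eta * exp a)) with (eta * (exp a * exp (-a))) by ring.
  rewrite Hinv. ring. }
specialize (Hb s Hs). cbv beta in Hb |- *.
destruct grp1 as [Hbl1 _].
apply Rle_lt_trans with (norm (U1 a (scal (exp (-a)) (minus (scal (/ s) (minus (U2 s x) x)) y)))).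
{ right. apply f_equal. rewrite comm12. fold s.
  apply (@id_W1 E (U1 a)).
  - intros k v. apply (proj1 (proj2 (Hbl1 a))).
  - intros u v. apply blin_minus. apply Hbl1.
  - lra.
  - lra.
  - unfold s. ring. }
eapply Rle_lt_trans. apply (proj2 (proj2 (Hbl1 a))).
eapply Rle_lt_trans. apply nscal_pos. lra.
apply Rlt_le_trans with (exp (-a) * (eps * exp a)).
apply Rmult_lt_compat_l; auto.
right. replace (exp (- a) * (eps * exp a)) with (eps * (exp a * exp (-a))) by ring.
rewrite Hinv. ring.
Qed.


Lemma gen2_W m c x y : 0 <= m -> 0 < c -> gen E U2 x y ->
  gen E U2 (Wop U1 m c x) (Wop U1 (m+1) c y).
Proof.
intros Hm Hc H. unfold gen in *. apply lim_ar. intros eps He.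
destruct (proj1 (lim_ar _ _ _) H (eps / (c+1))) as [eta [Heta Hb]].
{ apply Rdiv_lt_0_compat; lra. }
exists eta. split; auto. intros z Hz. cbv beta.
pose proof grp1 as G1. pose proof grp2 as G2.
destruct G1 as [Hbl1 [_ [_ _]]]. destruct G2 as [Hbl2 _].
pose (phi := fun u => scal (exp (-(m*u))) (U1 u x)).
pose (psi := fun u => scal (exp (-((m+1)*u))) (U1 u y)).
assert (exphi : ex_RInt phi 0 c) by exact (phi_ex E U1 m x grp1 0 c).
assert (expsi : ex_RInt psi 0 c) by exact (phi_ex E U1 (m+1) y grp1 0 c).
assert (exU : ex_RInt (fun u => U2 z (phi u)) 0 c) by exact (ex_RInt_blin E (U2 z) (Hbl2 z) phi 0 c exphi).
pose (g := fun u => minus (scal (/ z) (minus (U2 z (phi u)) (phi u))) (psi u)).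
assert (exg : ex_RInt g 0 c).
{ exact (ex_RInt_minus _ psi 0 c (ex_RInt_scal _ 0 c (/ z) (ex_RInt_minus (fun u => U2 z (phi u)) phi 0 c exU exphi)) expsi). }
assert (Heq : RInt g 0 c =
  minus (scal (/ z) (minus (U2 z (Wop U1 m c x)) (Wop U1 m c x))) (Wop U1 (m + 1) c y)).
{ assert (ex2 : ex_RInt (fun u => minus (U2 z (phi u)) (phi u)) 0 c).
  { exact (ex_RInt_minus (fun u => U2 z (phi u)) phi 0 c exU exphi). }
  assert (ex1 : ex_RInt (fun u => scal (/ z) (minus (U2 z (phi u)) (phi u))) 0 c).
  { exact (ex_RInt_scal _ 0 c (/ z) ex2). }
  pose proof (RInt_minus _ psi 0 c ex1 expsi) as e1.
  pose proof (RInt_scal _ 0 c (/ z) ex2) as e2.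
  pose proof (RInt_minus _ phi 0 c exU exphi) as e3.
  pose proof (RInt_blin E (U2 z) (Hbl2 z) phi 0 c exphi) as e4.
  etransitivity; [exact e1|].
  etransitivity; [apply (f_equal (fun v => minus v (RInt psi 0 c))); exact e2 |].
  etransitivity; [apply (f_equal (fun v => minus (scal (/z) v) (RInt psi 0 c))); exact e3|].
  etransitivity; [apply (f_equal (fun v => minus (scal (/z) (minus v (RInt phi 0 c))) (RInt psi 0 c))); exact e4|].
  reflexivity. }
apply Rle_lt_trans with (norm (RInt g 0 c)).
{ right. apply f_equal. symmetry. exact Heq. }
apply Rle_lt_trans with ((c - 0) * (eps / (c + 1))).
2:{ replace ((c - 0) * (eps / (c + 1))) with (eps * (c / (c+1))) by (field; lra).
    apply Rlt_le_trans with (eps * 1). apply Rmult_lt_compat_l; auto.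
    apply (Rmult_lt_reg_r (c+1)). lra. replace (c / (c + 1) * (c + 1)) with c by (field; lra). lra. lra. }
apply (norm_RInt_le_const g 0 c). lra.
2:{ apply RInt_correct. exact exg. }
intros u Hu.
set (s := exp (-u) * z).
assert (Heu : exp (-u) <= 1) by (apply exp_le_1; lra).
assert (Hs : 0 < s < eta).
{ unfold s. assert (0 < exp (-u)) by apply exp_pos. split. apply Rmult_lt_0_compat; lra.
  apply Rle_lt_trans with (1 * z). apply Rmult_le_compat_r; lra. lra. }
specialize (Hb s Hs). cbv beta in Hb.
assert (Hem : exp (-(m*u)) <= 1) by (apply exp_le_1; nra).
assert (Hem0 : 0 < exp (-(m*u))) by apply exp_pos.
assert (Hgu : g u = scal (exp (-(m*u))) (U1 u (scal (exp (-u)) (minus (scal (/ s) (minus (U2 s x) x)) y)))).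
{ change (g u) with (minus (scal (/ z) (minus (U2 z (scal (exp (-(m*u))) (U1 u x))) (scal (exp (-(m*u))) (U1 u x)))) (scal (exp (-((m+1)*u))) (U1 u y))).
  rewrite (proj1 (proj2 (Hbl2 z))). rewrite comm12. fold s.
  replace (exp (-((m+1)*u))) with (exp (-(m*u)) * exp (-u)) by (rewrite <- exp_plus; f_equal; ring).
  apply (@id_W E (U1 u)).
  - intros k v. apply (proj1 (proj2 (Hbl1 u))).
  - intros a b. apply blin_minus. apply Hbl1.
  - lra.
  - lra.
  - unfold s. ring. }
rewrite Hgu.
eapply Rle_trans. apply nscal_pos. lra.
eapply Rle_trans. apply Rmult_le_compat_l. lra. apply (proj2 (proj2 (Hbl1 u))).
eapply Rle_trans. apply Rmult_le_compat_l. lra. apply nscal_pos. apply Rlt_le, exp_pos.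
assert (0 <= norm (minus (scal (/ s) (minus (U2 s x) x)) y)) by apply norm_ge_0.
assert (0 < exp (- u)) by apply exp_pos.
apply Rle_trans with (1 * (1 * (eps / (c + 1)))). 2: lra.
apply Rmult_le_compat; try lra. apply Rmult_le_pos; lra.
apply Rmult_le_compat; [lra | apply norm_ge_0 | lra | left; exact Hb].
Qed.


Inductive Good : nat -> nat -> E -> Prop :=
| Good_mk p q x :
   (forall p', p = S p' -> exists y, gen E U1 x y /\ Good p' q y) ->
   (forall q', q = S q' -> exists y, gen E U2 x y /\ Good p q' y) ->
   Good p q x.

Lemma blin1 a : blin (U1 a).
Proof. destruct grp1 as [H _]. apply H. Qed.
Lemma blin2 a : blin (U2 a).
Proof. destruct grp2 as [H _]. apply H. Qed.

Lemma Good_inv p q x : Good p q x ->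
  (forall p', p = S p' -> exists y, gen E U1 x y /\ Good p' q y) /\
  (forall q', q = S q' -> exists y, gen E U2 x y /\ Good p q' y).
Proof. intros G; destruct G; auto. Qed.

Lemma Good_mono n : forall p q x, (p + q <= n)%nat -> Good p q x ->
  forall p' q', (p' <= p)%nat -> (q' <= q)%nat -> Good p' q' x.
Proof.
induction n; intros p q x Hn HG p' q' Hp Hq; destruct HG as [p q x H1 H2];
  constructor.
- intros p'' ->. exfalso. lia.
- intros q'' ->. exfalso. lia.
- intros p'' ->. destruct p as [|p0]. lia.
  destruct (H1 p0 eq_refl) as [y [Hy Gy]]. exists y. split. exact Hy.
  apply (IHn p0 q y). lia. exact Gy. lia. lia.
- intros q'' ->. destruct q as [|q0]. lia.
  destruct (H2 q0 eq_refl) as [y [Hy Gy]]. exists y. split. exact Hy.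
  apply (IHn p q0 y). lia. exact Gy. lia. lia.
Qed.

Lemma Good_mono' p q x p' q' : Good p q x -> (p' <= p)%nat -> (q' <= q)%nat -> Good p' q' x.
Proof. intros. eapply Good_mono; eauto. Qed.

Lemma Good_plus n : forall p q x x', (p + q <= n)%nat -> Good p q x -> Good p q x' ->
  Good p q (plus x x').
Proof.
induction n; intros p q x x' Hn G G'; destruct G as [p q x H1 H2];
  destruct G' as [p q x' H1' H2']; constructor.
- intros p'' ->. exfalso. lia.
- intros q'' ->. exfalso. lia.
- intros p'' ->. destruct (H1 p'' eq_refl) as [y [Hy Gy]].
  destruct (H1' p'' eq_refl) as [y' [Hy' Gy']].
  exists (plus y y'). split. apply gen_plus. exact blin1. exact Hy. exact Hy'.
  apply IHn. lia. exact Gy. exact Gy'.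
- intros q'' ->. destruct (H2 q'' eq_refl) as [y [Hy Gy]].
  destruct (H2' q'' eq_refl) as [y' [Hy' Gy']].
  exists (plus y y'). split. apply gen_plus. exact blin2. exact Hy. exact Hy'.
  apply IHn. lia. exact Gy. exact Gy'.
Qed.

Lemma Good_scal n : forall p q x (a : R), (p + q <= n)%nat -> Good p q x ->
  Good p q (scal a x).
Proof.
induction n; intros p q x a Hn G; destruct G as [p q x H1 H2]; constructor.
- intros p'' ->. exfalso. lia.
- intros q'' ->. exfalso. lia.
- intros p'' ->. destruct (H1 p'' eq_refl) as [y [Hy Gy]].
  exists (scal a y). split. apply gen_scal. exact blin1. exact Hy.
  apply IHn. lia. exact Gy.
- intros q'' ->. destruct (H2 q'' eq_refl) as [y [Hy Gy]].
  exists (scal a y). split. apply gen_scal. exact blin2. exact Hy.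
  apply IHn. lia. exact Gy.
Qed.

Lemma Good_T1 n : forall p q x (a : R), (p + q <= n)%nat -> Good p q x ->
  Good p q (U1 a x).
Proof.
induction n; intros p q x a Hn G; destruct G as [p q x H1 H2]; constructor.
- intros p'' ->. exfalso. lia.
- intros q'' ->. exfalso. lia.
- intros p'' ->. destruct (H1 p'' eq_refl) as [y [Hy Gy]].
  exists (U1 a y). split. apply gen_comm. apply blin1. intros; apply comm11. exact Hy.
  apply IHn. lia. exact Gy.
- intros q'' ->. destruct (H2 q'' eq_refl) as [y [Hy Gy]].
  exists (scal (exp (-a)) (U1 a y)). split. apply gen2_T1. exact Hy.
  apply (Good_scal (S n)). lia. apply IHn. lia. exact Gy.
Qed.

Lemma Good_T2_aux n : forall p q x (a : R), p = 0%nat -> (q <= n)%nat -> Good p q x -> Good p q (U2 a x).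
Proof.
induction n; intros p q x a Hp0 Hn G; destruct G as [p q x H1 H2]; constructor.
- intros p'' Hp. exfalso. lia.
- intros q'' ->. exfalso. lia.
- intros p'' Hp. exfalso. lia.
- intros q'' ->. destruct (H2 q'' eq_refl) as [y [Hy Gy]].
  exists (U2 a y). split. apply gen_comm. apply blin2. intros; apply comm22. exact Hy.
  apply IHn. exact Hp0. lia. exact Gy.
Qed.

Lemma Good_T2 q x a : Good 0 q x -> Good 0 q (U2 a x).
Proof. intros G. apply (Good_T2_aux q 0 q x a); auto. Qed.


Lemma Good_plus' p q x x' : Good p q x -> Good p q x' -> Good p q (plus x x').
Proof. intros; eapply Good_plus; eauto. Qed.
Lemma Good_scal' p q x a : Good p q x -> Good p q (scal a x).
Proof. intros; eapply Good_scal; eauto. Qed.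
Lemma Good_T1' p q x a : Good p q x -> Good p q (U1 a x).
Proof. intros; eapply Good_T1; eauto. Qed.
Lemma Good_minus p q x x' : Good p q x -> Good p q x' -> Good p q (minus x x').
Proof.
intros G G'. rewrite (@minus_scal E). apply Good_plus'. auto. apply Good_scal'. auto.
Qed.

Section WC.
Variable c : R.
Hypothesis Hc : 0 < c.

Lemma Good_WD n : forall p q x m, 0 <= m -> (p + q <= n)%nat -> Good p q x ->
  Good p q (Wop U1 m c x).
Proof.
induction n; intros p q x m Hm Hn G; pose proof G as G0; destruct G as [p q x H1 H2]; constructor.
- intros p'' ->. exfalso. lia.
- intros q'' ->. exfalso. lia.
- intros p' ->.
  exists (plus (minus (scal (exp (-(m*c))) (U1 c x)) x) (scal m (Wop U1 m c x))).
  split. apply gen_W. exact grp1.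
  assert (Gx : Good p' q x) by (eapply Good_mono'; eauto).
  apply Good_plus'. apply Good_minus. apply Good_scal'. apply Good_T1'. exact Gx. exact Gx.
  apply Good_scal'. apply IHn; auto. lia.
- intros q' ->. destruct (H2 q' eq_refl) as [y [Hy Gy]].
  exists (Wop U1 (m+1) c y). split. apply gen2_W; auto.
  apply IHn; auto. lra. lia.
Qed.

Lemma Good_WC q : forall p x m, 0 <= m -> Good p q x -> Good (S p) q (Wop U1 m c x).
Proof.
induction q; intros p x m Hm G; pose proof G as G0; destruct (Good_inv _ _ _ G) as [H1 H2]; constructor.
- intros p' Hp. injection Hp as <-.
  exists (plus (minus (scal (exp (-(m*c))) (U1 c x)) x) (scal m (Wop U1 m c x))).
  split. apply gen_W. exact grp1.
  apply Good_plus'. apply Good_minus. apply Good_scal'. apply Good_T1'. exact G0. exact G0.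
  apply Good_scal'. eapply Good_WD; eauto.
- intros q' Hq. discriminate.
- intros p' Hp. injection Hp as <-.
  exists (plus (minus (scal (exp (-(m*c))) (U1 c x)) x) (scal m (Wop U1 m c x))).
  split. apply gen_W. exact grp1.
  apply Good_plus'. apply Good_minus. apply Good_scal'. apply Good_T1'. exact G0. exact G0.
  apply Good_scal'. eapply Good_WD; eauto.
- intros q' Hq. injection Hq as <-. destruct (H2 q eq_refl) as [y [Hy Gy]].
  exists (Wop U1 (m+1) c y). split. apply gen2_W; auto.
  apply IHq; auto. lra.
Qed.

Lemma Good_S2D_aux n : forall p q x, p = 0%nat -> (q <= n)%nat -> Good p q x ->
  Good p q (Wop U2 0 c x).
Proof.
induction n; intros p q x Hp0 Hn G; pose proof G as G0; destruct (Good_inv _ _ _ G) as [H1 H2]; constructor.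
- intros p'' Hp. exfalso. lia.
- intros q'' ->. exfalso. lia.
- intros p'' Hp. exfalso. lia.
- intros q' ->. subst p.
  exists (plus (minus (scal (exp (-(0*c))) (U2 c x)) x) (scal 0 (Wop U2 0 c x))).
  split. apply gen_W. exact grp2.
  assert (Gx : Good 0 q' x) by (eapply Good_mono'; eauto).
  apply Good_plus'. apply Good_minus. apply Good_scal'. apply Good_T2. exact Gx. exact Gx.
  apply Good_scal'. apply IHn; auto. lia.
Qed.

Lemma Good_S2C q x : Good 0 q x -> Good 0 (S q) (Wop U2 0 c x).
Proof.
intros G. pose proof G as G0. constructor.
- intros p' Hp. discriminate.
- intros q' Hq. injection Hq as <-.
  exists (plus (minus (scal (exp (-(0*c))) (U2 c x)) x) (scal 0 (Wop U2 0 c x))).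
  split. apply gen_W. exact grp2.
  apply Good_plus'. apply Good_minus. apply Good_scal'. apply Good_T2. exact G0. exact G0.
  apply Good_scal'. eapply Good_S2D_aux; eauto.
Qed.

End WC.


Lemma applies_snoc w : forall x y g j, genj E T j x y -> applies E T w y g ->
  applies E T (w ++ j :: nil) x g.
Proof.
induction w as [|a w IH]; intros x y g j Hj Ha.
- simpl in *. exists x. split. reflexivity. subst. exact Hj.
- simpl in *. destruct Ha as [h [Hw Hh]]. exists h. split. eapply IH; eauto. exact Hh.
Qed.

Lemma Good_words w : forall p q x, (cf w <= p)%nat -> (ct w <= q)%nat -> Good p q x ->
  exists g, applies E T w x g.
Proof.
induction w as [|j w IH] using rev_ind; intros p q x Hp Hq G.
- exists x. reflexivity.
- rewrite cf_app in Hp. rewrite ct_app in Hq.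
  destruct (Good_inv _ _ _ G) as [H1 H2]. destruct j.
  + destruct q as [|q']. lia.
    destruct (H2 q' eq_refl) as [y [Hy Gy]].
    destruct (IH p q' y) as [g Hg]; try lia. exact Gy.
    exists g. eapply applies_snoc; eauto.
  + destruct p as [|p']. lia.
    destruct (H1 p' eq_refl) as [y [Hy Gy]].
    destruct (IH p' q y) as [g Hg]; try lia. exact Gy.
    exists g. eapply applies_snoc; eauto.
Qed.

Lemma cube_mix r c f : forall n a,
  cube_int E (n + r) c (fun l => U1 (a + sumR (firstn n l)) (U2 (sumR (skipn n l)) f)) =
  U1 a (Nat.iter n (Wop U1 0 c) (Nat.iter r (Wop U2 0 c) f)).
Proof.
induction n; intros a.
- change (0 + r)%nat with r.
  assert (Hf : (fun l => U1 (a + sumR (firstn 0 l)) (U2 (sumR (skipn 0 l)) f)) = (fun l => U1 a (U2 (0 + sumR l) f))).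
  { apply functional_extensionality. intros l. simpl. f_equal. ring. f_equal. ring. }
  rewrite Hf. rewrite (cube_U U2 (U1 a) c f grp2 (blin1 a)).
  destruct grp2 as [_ [H0 _]]. rewrite H0. reflexivity.
- change (S n + r)%nat with (S (n + r)). rewrite cube_S.
  transitivity (RInt (fun t => U1 a (U1 t (Nat.iter n (Wop U1 0 c) (Nat.iter r (Wop U2 0 c) f)))) 0 c).
  { apply RInt_ext. intros t _.
    assert (Hf : (fun l => U1 (a + sumR (firstn (S n) (t :: l))) (U2 (sumR (skipn (S n) (t :: l))) f))
       = (fun l => U1 ((a + t) + sumR (firstn n l)) (U2 (sumR (skipn n l)) f))).
    { apply functional_extensionality. intros l. simpl. f_equal. ring. }
    rewrite Hf, IHn. destruct grp1 as [_ [_ [Hadd _]]]. rewrite Hadd. reflexivity. }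
  destruct grp1 as [_ [_ [_ Hc]]].
  rewrite (RInt_blin _ (U1 a) (blin1 a)
    (fun t => U1 t (Nat.iter n (Wop U1 0 c) (Nat.iter r (Wop U2 0 c) f))) 0 c
    (ex_RInt_continuous _ _ _ (fun z _ => Hc _ z))).
  apply f_equal. symmetry. exact (Wop0 _ c _).
Qed.

End Rep.

Theorem mainTheorem9 (E : CompleteNormedModule R_AbsRing) (T : R -> R -> E -> E)
  (HT : is_contr_rep E T) (r : nat) (hr : (1 <= r)%nat) (s : R) (hs : 0 < s) :
  forall f : E, in_Er E T r (P_op E T r s f).
Proof.
intros f.
pose (c := s / INR r).
assert (Hc : 0 < c). { unfold c. apply Rdiv_lt_0_compat; auto. apply lt_0_INR; lia. }
assert (HP : P_op E T r s f = scal (/ (c ^ (2*r)))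
   (Nat.iter r (Wop (T1 E T) 0 c) (Nat.iter r (Wop (T2 E T) 0 c) f))).
{ unfold P_op. fold c. apply f_equal.
  replace (2*r)%nat with (r + r)%nat by lia.
  assert (Hf : (fun l => T1 E T (sumR (firstn r l)) (T2 E T (sumR (skipn r l)) f)) =
     (fun l => T1 E T (0 + sumR (firstn r l)) (T2 E T (sumR (skipn r l)) f))).
  { apply functional_extensionality. intros l. f_equal. ring. }
  rewrite Hf. rewrite (cube_mix E T HT r c f r 0).
  destruct (grp1 E T HT) as [_ [H0 _]]. apply H0. }
assert (G2 : forall k, Good E T 0 k (Nat.iter k (Wop (T2 E T) 0 c) f)).
{ induction k. constructor; intros; discriminate.
  apply (Good_S2C E T HT c). exact IHk. }
assert (G1 : forall k, Good E T k r (Nat.iter k (Wop (T1 E T) 0 c) (Nat.iter r (Wop (T2 E T) 0 c) f))).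
{ induction k. apply G2. apply (Good_WC E T HT c Hc). lra. exact IHk. }
intros w H1 H2. rewrite HP.
apply (Good_words E T w r r).
- pose proof (cf_ct w). lia.
- pose proof (cf_ct w). lia.
- apply (Good_scal' E T HT). apply G1.
Qed.
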